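(* Let $G$ be a compactly generated, totally disconnected, locally compact group. If $G$ has a compact, open, normal subgroup, then there exists a Cayley–Abels graph $\Gamma$ for $G$ of minimal degree $\mathrm{md}(G)$ on which $G$ acts discretely, i.e. the stabilizers in $G^\Gamma$ of vertices are finite, where $G^\Gamma$ is the permutation group on the vertex set induced by $G$.
   Context: A Cayley–Abels graph for a totally disconnected, locally compact group $G$ is a connected, locally finite simple graph with an action of $G$ by graph automorphisms (not necessarily faithful) that is vertex-transitive and has compact open vertex stabilizers; such a graph exists iff $G$ is compactly generated. $\mathrm{md}(G)$ is the minimal degree of a Cayley–Abels graph for $G$. *)

(* Defs.v *)
From HB Require Import structures.
From mathcomp Require Import all_boot all_order all_algebra.
From mathcomp Require Import all_classical all_reals all_analysis.
From Stdlib Require Import Relations.Relation_Operators.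
Set Implicit Arguments. Unset Strict Implicit. Unset Printing Implicit Defensive.
Local Open Scope classical_set_scope.
Local Open Scope card_scope.

Record topGroup := TopGroup {
  tg_carrier :> topologicalType;
  tg_mul : tg_carrier -> tg_carrier -> tg_carrier;
  tg_inv : tg_carrier -> tg_carrier;
  tg_one : tg_carrier;
  tg_mulA : forall x y z, tg_mul x (tg_mul y z) = tg_mul (tg_mul x y) z;
  tg_mul1g : forall x, tg_mul tg_one x = x;
  tg_mulVg : forall x, tg_mul (tg_inv x) x = tg_one;
  tg_mul_cont : continuous (fun p : tg_carrier * tg_carrier => tg_mul p.1 p.2);
  tg_inv_cont : continuous tg_inv
}.

Section GroupNotions.
Variable G : topGroup.
Local Notation mul := (tg_mul (t:=G)).
Local Notation inv := (tg_inv (t:=G)).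
Local Notation one := (tg_one G).

Definition is_subgroup (H : set G) : Prop :=
  H one /\ (forall x y, H x -> H y -> H (mul x y)) /\ (forall x, H x -> H (inv x)).

Definition is_normal_subgroup (H : set G) : Prop :=
  is_subgroup H /\ forall g h, H h -> H (mul (mul g h) (inv g)).

Definition generates (K : set G) : Prop :=
  forall H : set G, is_subgroup H -> K `<=` H -> H = [set: G].

Definition compactly_generated : Prop :=
  exists K : set G, compact K /\ generates K.

Definition tdlc : Prop :=
  totally_disconnected [set: G] /\ locally_compact [set: G].

End GroupNotions.

Record CayleyAbels (G : topGroup) := {
  ca_V : Type;
  ca_adj : ca_V -> ca_V -> Prop;
  ca_act : G -> ca_V -> ca_V;
  ca_inhabited : inhabited ca_V;
  ca_sym : forall v w, ca_adj v w -> ca_adj w v;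
  ca_irrefl : forall v, ~ ca_adj v v;
  ca_connected : forall v w, clos_refl_trans ca_V ca_adj v w;
  ca_locfin : forall v, finite_set [set w | ca_adj v w];
  ca_act1 : forall v, ca_act (tg_one G) v = v;
  ca_actM : forall g h v, ca_act (tg_mul g h) v = ca_act g (ca_act h v);
  ca_act_adj : forall g v w, ca_adj v w <-> ca_adj (ca_act g v) (ca_act g w);
  ca_trans : forall v w, exists g, ca_act g v = w;
  ca_stab_open : forall v, open [set g : G | ca_act g v = v];
  ca_stab_compact : forall v, compact [set g : G | ca_act g v = v]
}.

Definition ca_degree (G : topGroup) (Gam : CayleyAbels G) (d : nat) : Prop :=
  forall v : ca_V Gam, [set w | ca_adj v w] #= `I_d.

Definition is_md (G : topGroup) (d : nat) : Prop :=
  (exists Gam : CayleyAbels G, ca_degree Gam d) /\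
  (forall (Gam : CayleyAbels G) (d' : nat), ca_degree Gam d' -> (d <= d')%N).

(* G acts discretely on Gam: vertex stabilizers in the induced permutation
   group G^Gam (the image of G in Sym(V)) are finite. *)
Definition acts_discretely (G : topGroup) (Gam : CayleyAbels G) : Prop :=
  forall v : ca_V Gam,
    finite_set [set f : ca_V Gam -> ca_V Gam |
                 exists g : G, ca_act (c:=Gam) g v = v /\ f = ca_act (c:=Gam) g].

(* Main.v *)
Require Import Defs.
From HB Require Import structures.
From mathcomp Require Import all_boot all_order all_algebra.
From mathcomp Require Import all_classical all_reals all_analysis.
From Stdlib Require Import Relations.Relation_Operators.
From mathcomp Require Import finmap.
Set Implicit Arguments. Unset Strict Implicit. Unset Printing Implicit Defensive.
Local Open Scope classical_set_scope.
Local Open Scope card_scope.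

Section Grp.
Variable G : topGroup.
Local Notation mul := (tg_mul (t:=G)).
Local Notation inv := (tg_inv (t:=G)).
Local Notation one := (tg_one G).

Lemma mulgV' (x : G) : mul x (inv x) = one.
Proof.
rewrite -[LHS]tg_mul1g -{1}(tg_mulVg (inv x)) -tg_mulA (tg_mulA (inv x) x) tg_mulVg tg_mul1g.
exact: tg_mulVg.
Qed.
Lemma mulg1' (x : G) : mul x one = x.
Proof. by rewrite -(tg_mulVg x) tg_mulA mulgV' tg_mul1g. Qed.
Lemma invgK' (x : G) : inv (inv x) = x.
Proof. by rewrite -[LHS]mulg1' -(tg_mulVg x) tg_mulA tg_mulVg tg_mul1g. Qed.
Lemma mulKg' (x y : G) : mul (inv x) (mul x y) = y.
Proof. by rewrite tg_mulA tg_mulVg tg_mul1g. Qed.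
Lemma mulKVg' (x y : G) : mul x (mul (inv x) y) = y.
Proof. by rewrite tg_mulA mulgV' tg_mul1g. Qed.
Lemma invMg' (x y : G) : inv (mul x y) = mul (inv y) (inv x).
Proof.
rewrite -[RHS]mulg1' -(mulgV' (mul x y)) !tg_mulA.
by rewrite -(tg_mulA (inv y)) tg_mulVg mulg1' tg_mulVg tg_mul1g.
Qed.

Lemma lmul_cont (g : G) : continuous (fun x : G => mul g x).
Proof.
move=> x; apply: (@continuous2_cvg _ _ _ _ _ _ (fun _ => g) id (fun a b => mul a b)).
- exact: (@tg_mul_cont _ (g, x)).
- exact: cvg_cst.
- exact: cvg_id.
Qed.

Lemma open_ltrans (g : G) (U : set G) : open U -> open [set x | U (mul (inv g) x)].
Proof. by move=> oU; have /continuousP := (@lmul_cont (inv g)); apply. Qed.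
End Grp.
Definition pG (G : topGroup) : Type := tg_carrier G.
HB.instance Definition _ (G : topGroup) := Topological.on (pG G).
HB.instance Definition _ (G : topGroup) := isPointed.Build (pG G) (tg_one G).
Lemma compact_cover_G (G : topGroup) (A : set G) : compact A -> cover_compact A.
Proof. move=> cA; have := @compact_cover (pG G). move=> h. move: cA. change (@compact (pG G) A -> @cover_compact (pG G) A). by rewrite h. Qed.


Lemma rt_sym (T : Type) (R : T -> T -> Prop) :
  (forall x y, R x y -> R y x) ->
  forall x y, clos_refl_trans T R x y -> clos_refl_trans T R y x.
Proof.
move=> Rs x y; elim=> [a b /Rs ab|a|a b c _ IH1 _ IH2].
- exact: rt_step.
- exact: rt_refl.
- exact: rt_trans IH2 IH1.
Qed.

Section Quot.
Variable G : topGroup.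
Local Notation mul := (tg_mul (t:=G)).
Local Notation inv := (tg_inv (t:=G)).
Local Notation one := (tg_one G).
Variable V : Type.
Variable adj : V -> V -> Prop.
Variable act : G -> V -> V.
Hypothesis act1 : forall v, act one v = v.
Hypothesis actM : forall g h v, act (mul g h) v = act g (act h v).
Hypothesis adj_sym : forall v w, adj v w -> adj w v.
Hypothesis act_adj : forall g v w, adj v w -> adj (act g v) (act g w).
Variable K : set G.
Hypothesis HK : is_normal_subgroup K.

Lemma K1 : K one. Proof. by case: HK => -[]. Qed.
Lemma KM x y : K x -> K y -> K (mul x y). Proof. by case: HK => -[_ []] + _ _; apply. Qed.
Lemma KV x : K x -> K (inv x). Proof. by case: HK => -[_ []] _ + _; apply. Qed.
Lemma Kconj g h : K h -> K (mul (mul g h) (inv g)). Proof. by case: HK => _; apply. Qed.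

Lemma actVK g v : act (inv g) (act g v) = v.
Proof. by rewrite -actM tg_mulVg act1. Qed.
Lemma actKV g v : act g (act (inv g) v) = v.
Proof. by rewrite -actM mulgV' act1. Qed.

Definition orbit (v : V) : set V := [set w | exists k, K k /\ w = act k v].
Definition QV := {P : set V | exists v, P = orbit v}.
Definition qmk (v : V) : QV := exist _ (orbit v) (ex_intro _ v erefl).

Lemma QV_eq (a b : QV) : proj1_sig a = proj1_sig b -> a = b.
Proof.
case: a b => [P pP] [Q pQ] /= PQ; subst Q; congr exist; exact: Prop_irrelevance.
Qed.

Lemma QV_ind (a : QV) : exists v, a = qmk v.
Proof. by case: a => P [v pv]; exists v; apply: QV_eq. Qed.

Lemma orbit_eq v w : (exists k, K k /\ w = act k v) -> orbit v = orbit w.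
Proof.
case=> k [Kk ->]; apply/seteqP; split=> u [k' [Kk' ->]].
- exists (mul k' (inv k)); split; first by apply: KM => //; exact: KV.
  by rewrite actM actVK.
- by exists (mul k' k); split; [exact: KM| rewrite actM].
Qed.

Lemma qmk_eq v w : qmk v = qmk w <-> exists k, K k /\ w = act k v.
Proof.
split=> [e|h]; last by apply: QV_eq; exact: orbit_eq.
have : proj1_sig (qmk v) w by rewrite e /=; exists one; rewrite act1; split=> //; exact: K1.
by case=> k [Kk ->]; exists k.
Qed.

Lemma qmk_K k v : K k -> qmk (act k v) = qmk v.
Proof. by move=> Kk; symmetry; apply/qmk_eq; exists k. Qed.

Definition sact (g : G) (P : set V) : set V := [set w | P (act (inv g) w)].

Lemma sact_orbit g v : sact g (orbit v) = orbit (act g v).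
Proof.
apply/seteqP; split=> w.
- case=> k [Kk e]; exists (mul (mul g k) (inv g)); split; first exact: Kconj.
  by rewrite actM actVK actM -e actKV.
- case=> k [Kk ->]; exists (mul (mul (inv g) k) (inv (inv g))); split; first exact: Kconj.
  by rewrite invgK' !actM.
Qed.

Definition qact (g : G) (a : QV) : QV.
Proof.
exists (sact g (proj1_sig a)).
case: a => P [v e] /=; exists (act g v); rewrite e; exact: sact_orbit.
Defined.

Lemma qact_mk g v : qact g (qmk v) = qmk (act g v).
Proof. by apply: QV_eq => /=; exact: sact_orbit. Qed.

Lemma qact1 a : qact one a = a.
Proof. by case: (QV_ind a) => v ->; rewrite qact_mk act1. Qed.

Lemma qactM g h a : qact (mul g h) a = qact g (qact h a).
Proof. by case: (QV_ind a) => v ->; rewrite !qact_mk actM. Qed.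

Lemma qactVK g a : qact (inv g) (qact g a) = a.
Proof. by rewrite -qactM tg_mulVg qact1. Qed.

Lemma qact_K k : K k -> qact k = id.
Proof. move=> Kk; apply: funext => a; case: (QV_ind a) => v ->; rewrite qact_mk; exact: qmk_K. Qed.

Definition qadj (a b : QV) : Prop :=
  a <> b /\ exists v w, a = qmk v /\ b = qmk w /\ adj v w.

Lemma qadj_sym a b : qadj a b -> qadj b a.
Proof.
rewrite /qadj; case=> ne [v [w [ea [eb e]]]]; subst a b; split; first by move=> h; apply: ne; rewrite h.
by exists w, v; do 2 split => //; exact: adj_sym.
Qed.

Lemma qadj_irrefl a : ~ qadj a a.
Proof. by case. Qed.

Lemma qact_adj1 g a b : qadj a b -> qadj (qact g a) (qact g b).
Proof.
rewrite /qadj; case=> ne [v [w [ea [eb e]]]]; subst a b; split.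
- by move=> h; apply: ne; rewrite -(qactVK g (qmk v)) h qactVK.
- by exists (act g v), (act g w); rewrite !qact_mk; do 2 split => //; exact: act_adj.
Qed.

Lemma qact_adj g a b : qadj a b <-> qadj (qact g a) (qact g b).
Proof.
split; first exact: qact_adj1.
by move=> /(qact_adj1 (inv g)); rewrite !qactVK.
Qed.

Lemma qconn_lift v w : clos_refl_trans V adj v w -> clos_refl_trans QV qadj (qmk v) (qmk w).
Proof.
elim=> [a b ab|a|a b c _ IH1 _ IH2].
- have [->|ne] := pselect (qmk a = qmk b); first exact: rt_refl.
  by apply: rt_step; split=> //; exists a, b.
- exact: rt_refl.
- exact: rt_trans IH1 IH2.
Qed.

Lemma qneigh_sub v : [set b | qadj (qmk v) b] `<=` qmk @` [set w | adj v w].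
Proof.
move=> b [_ [v' [w' [e [-> a]]]]].
have [k [Kk ev']] : exists k, K k /\ v' = act k v by apply/qmk_eq.
exists (act (inv k) w'); last by apply: qmk_K; exact: KV.
by have := act_adj (inv k) a; rewrite ev' actVK.
Qed.

Lemma qstab v : [set g | qact g (qmk v) = qmk v] = [set g | exists k, K k /\ act g v = act k v].
Proof.
apply/seteqP; split=> g /=.
- rewrite qact_mk => /qmk_eq [k [Kk e]]; exists (inv k); split; first exact: KV.
  by rewrite [in RHS]e actVK.
- case=> k [Kk e]; rewrite qact_mk e; exact: qmk_K.
Qed.

Lemma qstab_open v : open [set g | act g v = v] -> open [set g | qact g (qmk v) = qmk v].
Proof.
move=> oGv; rewrite qstab.
have -> : [set g | exists k, K k /\ act g v = act k v] =
  \bigcup_(k in K) [set g | [set h | act h v = v] (mul (inv k) g)].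
  apply/seteqP; split=> g.
  - by case=> k [Kk e]; exists k => //=; rewrite actM e actVK.
  - case=> k Kk /= e; exists k; split => //.
    by rewrite -[in LHS](mulKVg' k g) actM e.
apply: bigcup_open => k _; exact: open_ltrans.
Qed.

Lemma qstab_compact v : compact K -> compact [set g | act g v = v] ->
  compact [set g | qact g (qmk v) = qmk v].
Proof.
move=> cK cGv; rewrite qstab.
have -> : [set g | exists k, K k /\ act g v = act k v] =
  (fun p : G * G => mul p.1 p.2) @` (K `*` [set g | act g v = v]).
  apply/seteqP; split=> g.
  - case=> k [Kk e]; exists (k, mul (inv k) g); last by rewrite /= mulKVg'.
    by split => //=; rewrite actM e actVK.
  - by case=> -[k u] [/= Kk Gu] <-; exists k; split => //; rewrite actM Gu.
apply: continuous_compact; last exact: compact_setX.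
apply: continuous_subspaceT; exact: tg_mul_cont.
Qed.

Lemma qdiscrete v : open K -> compact [set g | act g v = v] ->
  finite_set [set f : QV -> QV | exists g, qact g (qmk v) = qmk v /\ f = qact g].
Proof.
move=> oK cGv.
have cov : [set g | act g v = v] `<=` \bigcup_(u in [set g | act g v = v]) [set x | K (mul (inv u) x)].
  by move=> u Gu; exists u => //=; rewrite tg_mulVg; exact: K1.
move: cGv => /compact_cover_G /(_ G [set g | act g v = v] (fun u => [set x | K (mul (inv u) x)])).
move=> /(_ (fun u _ => open_ltrans u oK) cov) [D' D'sub D'cov].
refine (sub_finite_set _ (finite_image (fun u => qact u) (finite_fset D'))).
move=> f [g [st ->]].
have : [set g | exists k, K k /\ act g v = act k v] g by rewrite -qstab.
case=> k [Kk e].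
have Gu : act (mul (inv k) g) v = v by rewrite actM e actVK.
have [ui D'ui /= Kui] := D'cov _ Gu.
exists ui => //.
apply: funext => a.
rewrite -[in RHS](mulKVg' k g) -[in RHS](mulKVg' ui (mul (inv k) g)).
by rewrite qactM (qact_K Kk) /= qactM (qact_K Kui).
Qed.

End Quot.

Lemma eq_le_card T U (A : set T) (B : set U) : A #= B -> A #<= B.
Proof. by rewrite card_eq_le => /andP[]. Qed.

Lemma deg_le T U (N : set T) (N2 : set U) (f : T -> U) d d' :
  N #= `I_d -> N2 #= `I_d' -> N2 `<=` f @` N -> (d' <= d)%N.
Proof.
move=> e1 e2 sub; rewrite -card_le_II.
apply: card_le_trans (eq_le_card (card_esym e2)) _.
apply: card_le_trans (subset_card_le sub) _.
apply: card_le_trans (card_image_le f N) _.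
exact: eq_le_card.
Qed.


Section CAfacts.
Variable G : topGroup.
Variable Gam : CayleyAbels G.
Local Notation inv := (tg_inv (t:=G)).

Lemma ca_actVK g (v : ca_V Gam) : ca_act (inv g) (ca_act g v) = v.
Proof. by rewrite -ca_actM tg_mulVg ca_act1. Qed.
Lemma ca_actKV g (v : ca_V Gam) : ca_act g (ca_act (inv g) v) = v.
Proof. by rewrite -ca_actM mulgV' ca_act1. Qed.

Lemma ca_regular : exists n, ca_degree Gam n.
Proof.
case: (ca_inhabited Gam) => v0; have [n hn] := ca_locfin v0; exists n => v.
have [g <-] := ca_trans v0 v.
have -> : [set w | ca_adj (ca_act g v0) w] = (ca_act g) @` [set w | ca_adj v0 w].
  apply/seteqP; split=> w /=.
  - move=> h; exists (ca_act (inv g) w); last exact: ca_actKV.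
    by rewrite /= (ca_act_adj g) ca_actKV.
  - by case=> u h <-; rewrite -ca_act_adj.
apply: card_eq_trans _ hn; apply: inj_card_eq => x y _ _ e.
by rewrite -(ca_actVK g x) e ca_actVK.
Qed.
End CAfacts.

Section Step2.
Variable G : topGroup.
Variable Gam : CayleyAbels G.
Variable K : set G.
Hypothesis HK : is_normal_subgroup K.
Hypothesis cK : compact K.
Hypothesis oK : open K.

Let act := @ca_act G Gam.
Let adj := @ca_adj G Gam.
Let a1 : forall v, act (tg_one G) v = v := @ca_act1 G Gam.
Let aM := @ca_actM G Gam.
Let aadj : forall g v w, adj v w -> adj (act g v) (act g w) :=
  fun g v w h => proj1 (ca_act_adj g v w) h.

Let QV2 := QV act K.
Let qadj2 := qadj adj (act:=act) (K:=K).
Let qact2 := qact a1 aM HK.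

Lemma s2_inh : inhabited QV2.
Proof. by case: (ca_inhabited Gam) => v; exact: (inhabits (qmk act K v)). Qed.
Lemma s2_sym : forall a b, qadj2 a b -> qadj2 b a.
Proof. move=> a b; apply: qadj_sym; exact: ca_sym. Qed.
Lemma s2_irrefl : forall a, ~ qadj2 a a.
Proof. exact: qadj_irrefl. Qed.
Lemma s2_conn : forall a b, clos_refl_trans QV2 qadj2 a b.
Proof.
move=> a b; case: (QV_ind a) => v ->; case: (QV_ind b) => w ->.
exact: qconn_lift (ca_connected v w).
Qed.
Lemma s2_locfin : forall a, finite_set [set b | qadj2 a b].
Proof.
move=> a; case: (QV_ind a) => v ->.
apply: sub_finite_set (qneigh_sub a1 aM aadj HK (v:=v)) _.
exact: finite_image (ca_locfin v).
Qed.
Lemma s2_act1 : forall a, qact2 (tg_one G) a = a.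
Proof. exact: qact1. Qed.
Lemma s2_actM : forall g h a, qact2 (tg_mul g h) a = qact2 g (qact2 h a).
Proof. exact: qactM. Qed.
Lemma s2_act_adj : forall g a b, qadj2 a b <-> qadj2 (qact2 g a) (qact2 g b).
Proof. exact: qact_adj. Qed.
Lemma s2_trans : forall a b, exists g, qact2 g a = b.
Proof.
move=> a b; case: (QV_ind a) => v ->; case: (QV_ind b) => w ->.
have [g e] := ca_trans v w; exists g; rewrite /qact2 qact_mk; by rewrite /act e.
Qed.
Lemma s2_open : forall a, open [set g : G | qact2 g a = a].
Proof.
move=> a; case: (QV_ind a) => v ->; apply: qstab_open; exact: ca_stab_open.
Qed.
Lemma s2_compact : forall a, compact [set g : G | qact2 g a = a].
Proof.
move=> a; case: (QV_ind a) => v ->; apply: qstab_compact => //; exact: ca_stab_compact.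
Qed.

Definition QGam : CayleyAbels G :=
  @Build_CayleyAbels G QV2 qadj2 qact2 s2_inh s2_sym s2_irrefl s2_conn s2_locfin
    s2_act1 s2_actM s2_act_adj s2_trans s2_open s2_compact.

Lemma QGam_discrete : acts_discretely QGam.
Proof.
move=> a; case: (QV_ind a) => v ->.
exact (qdiscrete a1 aM HK oK (@ca_stab_compact G Gam v)).
Qed.

Lemma QGam_deg d d' : ca_degree Gam d -> ca_degree QGam d' -> (d' <= d)%N.
Proof.
move=> hd hd'; case: (ca_inhabited Gam) => v.
exact: deg_le (hd v) (hd' (qmk act K v)) (qneigh_sub a1 aM aadj HK (v:=v)).
Qed.
End Step2.


Lemma cover_fin (G : topGroup) (K K0 : set G) : open K -> K (tg_one G) -> compact K0 ->
  exists F : {fset G}, K0 `<=` \bigcup_(u in [set` F]) [set x | K (tg_mul (tg_inv u) x)].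
Proof.
move=> oK K1 cK0.
have cov : K0 `<=` \bigcup_(u in K0) [set x | K (tg_mul (tg_inv u) x)].
  by move=> u Ku; exists u => //=; rewrite tg_mulVg.
move: cK0 => /compact_cover_G /(_ G K0 (fun u => [set x | K (tg_mul (tg_inv u) x)])).
move=> /(_ (fun u _ => open_ltrans u oK) cov) [F _ Fcov].
by exists F.
Qed.

Section Step1.
Variable G : topGroup.
Local Notation mul := (tg_mul (t:=G)).
Local Notation inv := (tg_inv (t:=G)).
Local Notation one := (tg_one G).
Variable K : set G.
Hypothesis HK : is_normal_subgroup K.
Hypothesis cK : compact K.
Hypothesis oK : open K.
Variable K0 : set G.
Hypothesis gK0 : generates K0.
Variable F : {fset G}.
Hypothesis Fcov : K0 `<=` \bigcup_(u in [set` F]) [set x | K (mul (inv u) x)].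

Let act := fun (g x : G) => mul g x.
Let a1 : forall x, act one x = x := @tg_mul1g G.
Let aM : forall g h x, act (mul g h) x = act g (act h x) :=
  fun g h x => esym (tg_mulA g h x).
Definition adj0 (x y : G) := exists s, ([set` F] s \/ [set` F] (inv s)) /\ y = mul x s.
Lemma adj0_sym x y : adj0 x y -> adj0 y x.
Proof.
case=> s [hs ->]; exists (inv s); split; last by rewrite -tg_mulA mulgV' mulg1'.
by rewrite invgK'; case: hs; [right|left].
Qed.
Lemma adj0_act g x y : adj0 x y -> adj0 (act g x) (act g y).
Proof. by case=> s [hs ->]; exists s; split => //; rewrite /act tg_mulA. Qed.

Let QV1 := QV act K.
Let qadj1 := qadj adj0 (act:=act) (K:=K).
Let qactS := qact a1 aM HK.

Lemma rcancel (g k x : G) : mul g x = mul k x -> g = k.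
Proof.
move=> e; have : mul (mul g x) (inv x) = mul (mul k x) (inv x) by rewrite e.
by rewrite -!tg_mulA mulgV' !mulg1'.
Qed.

Lemma qmk_rK x k : K k -> qmk act K (mul x k) = qmk act K x.
Proof.
move=> Kk.
have -> : mul x k = act (mul (mul x k) (inv x)) x by rewrite /act -tg_mulA tg_mulVg mulg1'.
apply: qmk_K => //; exact: Kconj.
Qed.

Lemma s1_inh : inhabited QV1.
Proof. exact: (inhabits (qmk act K one)). Qed.
Lemma s1_sym : forall a b, qadj1 a b -> qadj1 b a.
Proof. move=> a b; apply: qadj_sym; exact: adj0_sym. Qed.
Lemma s1_irrefl : forall a, ~ qadj1 a a.
Proof. exact: qadj_irrefl. Qed.

Lemma s1_conn : forall a b, clos_refl_trans QV1 qadj1 a b.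
Proof.
pose H := [set x : G | forall a, clos_refl_trans QV1 qadj1 (qmk act K a) (qmk act K (mul a x))].
have sH : is_subgroup H.
  split; [|split].
  - by move=> a; rewrite mulg1'; exact: rt_refl.
  - move=> x y Hx Hy a; apply: rt_trans (Hx a) _.
    by have := Hy (mul a x); rewrite -tg_mulA.
  - move=> x Hx a; have := Hx (mul a (inv x)); rewrite -tg_mulA tg_mulVg mulg1'.
    by apply: rt_sym; exact: s1_sym.
have K0H : K0 `<=` H.
  move=> k0 /Fcov [u Fu /= Ku] a.
  rewrite -(mulKVg' u k0) tg_mulA qmk_rK //.
  apply: qconn_lift; apply: rt_step; exists u; split => //; by left.
have eH := gK0 sH K0H.
move=> a b; case: (QV_ind a) => x ->; case: (QV_ind b) => y ->.
have : H (mul (inv x) y) by rewrite eH.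
by move=> /(_ x); rewrite mulKVg'.
Qed.

Lemma s1_locfin : forall a, finite_set [set b | qadj1 a b].
Proof.
move=> a; case: (QV_ind a) => x ->.
apply: sub_finite_set (qneigh_sub a1 aM adj0_act HK (v:=x)) _.
apply: finite_image.
apply: (@sub_finite_set _ _ ((mul x) @` ([set` F] `|` inv @` [set` F]))).
  move=> y [s [hs ->]]; exists s => //; case: hs; [left|right] => //.
  by exists (inv s) => //; rewrite invgK'.
apply: finite_image; rewrite finite_setU; split => //; exact: finite_image.
Qed.

Lemma s1_act1 : forall a, qactS one a = a.
Proof. exact: qact1. Qed.
Lemma s1_actM : forall g h a, qactS (mul g h) a = qactS g (qactS h a).
Proof. exact: qactM. Qed.
Lemma s1_act_adj : forall g a b, qadj1 a b <-> qadj1 (qactS g a) (qactS g b).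
Proof. exact: (qact_adj a1 aM adj0_act HK). Qed.
Lemma s1_trans : forall a b, exists g, qactS g a = b.
Proof.
move=> a b; case: (QV_ind a) => x ->; case: (QV_ind b) => y ->.
exists (mul y (inv x)); rewrite /qactS qact_mk /act -tg_mulA tg_mulVg mulg1' //.
Qed.

Lemma s1_stab a : [set g : G | qactS g a = a] = K.
Proof.
case: (QV_ind a) => x ->; rewrite /qactS qstab; apply/seteqP; split=> g /=.
- by case=> k [Kk /rcancel ->].
- by move=> Kg; exists g.
Qed.
Lemma s1_open : forall a, open [set g : G | qactS g a = a].
Proof. by move=> a; rewrite s1_stab. Qed.
Lemma s1_compact : forall a, compact [set g : G | qactS g a = a].
Proof. by move=> a; rewrite s1_stab. Qed.

Definition Gam0 : CayleyAbels G :=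
  @Build_CayleyAbels G QV1 qadj1 qactS s1_inh s1_sym s1_irrefl s1_conn s1_locfin
    s1_act1 s1_actM s1_act_adj s1_trans s1_open s1_compact.
End Step1.

Theorem corollary2p9 (G : topGroup) :
  tdlc G -> compactly_generated G ->
  (exists K : set G, is_normal_subgroup K /\ compact K /\ open K) ->
  exists (Gam : CayleyAbels G) (d : nat),
    is_md G d /\ ca_degree Gam d /\ acts_discretely Gam.
Proof.
move=> _ [K0 [cK0 gK0]] [K [HK [cK oK]]].
have [F Fcov] := cover_fin oK (K1 HK) cK0.
pose Gam0' := Gam0 HK cK oK gK0 Fcov.
have [n0 hn0] := ca_regular Gam0'.
pose P := fun n => `[< exists Gam : CayleyAbels G, ca_degree Gam n >].
have exP : exists n, P n by exists n0; apply/asboolP; exists Gam0'.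
case: (ex_minnP exP) => d /asboolP [Gam hd] mind.
exists (QGam Gam HK cK), d; split.
  split; first by exists Gam.
  by move=> Gam' d' h; apply: mind; apply/asboolP; exists Gam'.
split; last exact: QGam_discrete.
have [d' hd'] := ca_regular (QGam Gam HK cK).
have le1 := QGam_deg hd hd'.
have le2 : (d <= d')%N by apply: mind; apply/asboolP; exists (QGam Gam HK cK).
have -> : d = d' by apply/eqP; rewrite eqn_leq le2 le1.
exact: hd'.
Qed.
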